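(* Fix $m\ge1$ and let $\tilde F(u_1,\dots,u_m;t)=\sum_{n\ge0}\sum_{\pi\in\Pi^{(m)}_n}u_1^{a_1(\pi)}\cdots u_m^{a_m(\pi)}t^{n}$. Then, writing $\tilde F(\mathbf u;t)=\tilde F(u_1,\dots,u_m;t)$, \[ \tilde F(\mathbf u;t)=u_1\cdots u_m+t\,u_1\cdots u_m\,\tilde F(\mathbf u;t)+t\,u_1\,\frac{\tilde F(\mathbf u;t)-u_1\tilde F(1,u_2,\dots,u_m;t)}{u_1-1} +t\sum_{j=2}^m u_1u_2\cdots u_j\,\frac{\tilde F(\mathbf u;t)-\tilde F(u_1,\dots,u_{j-2},u_{j-1}u_j,1,u_{j+1},\dots,u_m;t)}{u_j-1}. \]
   Context: A set partition of $[n]$ is a collection of nonempty pairwise disjoint blocks with union $[n]$ ($n=0$: empty partition). Arcs are pairs $(i,j)$, $i<j$, of consecutive elements (in numerical order) of a block. An $m$-nesting is a set of $m$ arcs $(i_1,j_1),\dots,(i_m,j_m)$ with $i_1<\dots<i_m<j_m<\dots<j_1$. $\Pi^{(m)}_n$ is the set of partitions of $[n]$ with no $(m+1)$-nesting. The label $(a_1(\pi),\dots,a_m(\pi))$ of $\pi\in\Pi^{(m)}_n$ is defined by: $a_j(\pi)=1+$(number of blocks) if $\pi$ has no $j$-nesting; otherwise $a_j(\pi)=1+$(number of blocks whose maximal element exceeds the smallest vertex of the rightmost $j$-nesting), the rightmost $j$-nesting being one whose smallest vertex is maximal among all $j$-nestings. The empty partition has label $(1,\dots,1)$. The identity is one of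 formal power series in $t$ with polynomial coefficients in the $u_i$ (the quotients are polynomial). *)

(* Defs.v *)
From HB Require Import structures.
From mathcomp Require Import all_boot all_order all_algebra.
From mathcomp Require Export mpoly.
Set Implicit Arguments. Unset Strict Implicit. Unset Printing Implicit Defensive.
Import Order.TTheory GRing.Theory Num.Theory.
Local Open Scope ring_scope.

(* Ground set [n] is represented by 'I_n = {0,...,n-1} (order-preserving shift). *)
Definition set_partition (n : nat) (P : {set {set 'I_n}}) : bool :=
  partition P [set: 'I_n].

Definition arc (n : nat) (P : {set {set 'I_n}}) (i j : 'I_n) : bool :=
  [exists B in P, [&& i \in B, j \in B, (i < j)%N &
                     [forall k in B, ~~ ((i < k)%N && (k < j)%N)]]].

Definition is_nesting (n k : nat) (P : {set {set 'I_n}})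
    (f : {ffun 'I_k -> 'I_n * 'I_n}) : bool :=
  [forall a : 'I_k, arc P (f a).1 (f a).2] &&
  [forall a : 'I_k, forall b : 'I_k, (a < b)%N ==>
     (((f a).1 < (f b).1)%N && ((f b).2 < (f a).2)%N)].

Definition has_nesting (n k : nat) (P : {set {set 'I_n}}) : bool :=
  [exists f : {ffun 'I_k -> 'I_n * 'I_n}, is_nesting P f].

Definition nesting_mins (n k : nat) (P : {set {set 'I_n}}) : {set 'I_n} :=
  [set s | [exists f : {ffun 'I_k -> 'I_n * 'I_n},
     [&& is_nesting P f, [exists a : 'I_k, (f a).1 == s] &
         [forall a : 'I_k, (s <= (f a).1)%N]]]].

Definition bmax (n : nat) (B : {set 'I_n}) : nat := \max_(x in B) (val x).

(* The label a_k(P): 1 + #blocks if no k-nesting; otherwise 1 + number of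
   blocks whose maximal element exceeds the smallest vertex of the rightmost
   k-nesting (the largest smallest-vertex among all k-nestings). *)
Definition label (n k : nat) (P : {set {set 'I_n}}) : nat :=
  if ~~ has_nesting k P then #|P|.+1
  else let s := \max_(x in nesting_mins k P) (val x) in
       #|[set B in P | (s < bmax B)%N]|.+1.

Definition Pim (m n : nat) (P : {set {set 'I_n}}) : bool :=
  set_partition P && ~~ has_nesting m.+1 P.

(* Coefficient of t^n in F~(u_1..u_m;t): variable u_{j+1} is 'X_j, j : 'I_m. *)
Definition Fcoef (m n : nat) : {mpoly int[m]} :=
  \sum_(P : {set {set 'I_n}} | Pim m P)
     \prod_(j < m) 'X_j ^+ label j.+1 P.

(* Formal power series in t with coefficients in a ring: sequences of
   coefficients.  tmul G = t * G. *)
Definition tmul (R : nzRingType) (G : nat -> R) : nat -> R :=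
  fun n => if n is n'.+1 then G n' else 0.
Definition fcst (R : nzRingType) (c : R) : nat -> R :=
  fun n => if n is 0 then c else 0.

Definition subst_vars (m : nat) (f : 'I_m -> {mpoly int[m]})
    (p : {mpoly int[m]}) : {mpoly int[m]} :=
  comp_mpoly [tuple f i | i < m] p.

Definition sub_first (m : nat) : 'I_m -> {mpoly int[m]} :=
  fun i => if val i == 0%N then 1 else 'X_i.

(* for j = j'+1 >= 2 (0-based j' >= 1):
   (u_1,...,u_m) -> (u_1,...,u_{j-2}, u_{j-1} u_j, 1, u_{j+1},...,u_m) *)
Definition sub_merge (m : nat) (j' : 'I_m) : 'I_m -> {mpoly int[m]} :=
  fun i => if val i == j'.-1 then 'X_i * 'X_j'
           else if i == j' then 1 else 'X_i.

(* subtracted term in the numerator of the j-th quotient (0-based j') *)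
Definition numer_sub (m : nat) (j' : 'I_m) (F : nat -> {mpoly int[m]})
    (n : nat) : {mpoly int[m]} :=
  if val j' == 0%N then 'X_j' * subst_vars (@sub_first m) (F n)
  else subst_vars (sub_merge j') (F n).

(* Main.v *)
Require Import Defs.
From HB Require Import structures.
From mathcomp Require Import all_boot all_order all_algebra.
From mathcomp Require Import mpoly.
Import GRing.Theory.
Local Open Scope ring_scope.

Set Implicit Arguments. Unset Strict Implicit. Unset Printing Implicit Defensive.
Local Open Scope nat_scope.

Definition arcB (N : nat) (B : {set 'I_N}) (i j : nat) : bool :=
  [exists i' in B, exists j' in B, [&& val i' == i, val j' == j, i < j &
     [forall k in B, ~~ ((i < val k) && (val k < j))]]].

Definition Ar (N : nat) (P : {set {set 'I_N}}) (i j : nat) : bool :=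
  [exists B in P, arcB B i j].

Fixpoint Dr (a : nat -> nat -> bool) (N k x y : nat) : bool :=
  if k is k'.+1 then a x y && [exists x' : 'I_N, exists y' : 'I_N,
       [&& x < x', y' < y & Dr a N k' x' y']]
  else a x y.

Lemma arcE N (P : {set {set 'I_N}}) (i j : 'I_N) : Defs.arc P i j = Ar P i j.
Proof.
apply/existsP/existsP => -[B /andP[BP H]]; exists B; rewrite BP /=.
  case/and4P: H => iB jB ij H; apply/existsP; exists i; rewrite iB /=.
  by apply/existsP; exists j; rewrite jB /= !eqxx ij.
case/existsP: H => i' /andP[i'B /existsP[j' /andP[j'B /and4P[/eqP ei /eqP ej ij H]]]].
have ii : i' = i by apply/val_inj.
have jj : j' = j by apply/val_inj.
by subst; rewrite i'B j'B ij.
Qed.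

Lemma Ar_lt N (P : {set {set 'I_N}}) i j : Ar P i j -> i < j < N.
Proof.
case/existsP => B /andP[_ /existsP[i' /andP[_ /existsP[j' /andP[_ /and4P[/eqP <- /eqP <- ij _]]]]]].
by rewrite ij ltn_ord.
Qed.

Lemma Dr_Ar a N k x y : Dr a N k x y -> a x y.
Proof. by case: k => [|k] //= /andP[]. Qed.

Lemma nest_Dr N k (P : {set {set 'I_N}}) (f : {ffun 'I_k.+1 -> 'I_N * 'I_N}) :
  is_nesting P f -> Dr (Ar P) N k (f ord0).1 (f ord0).2.
Proof.
elim: k f => [|k IH] f /andP[/forallP Ha /forallP Hb].
  by rewrite /= -arcE.
rewrite /= -arcE Ha /=.
pose g := [ffun a : 'I_k.+1 => f (lift ord0 a)].
have Hg : is_nesting P g.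
  apply/andP; split; apply/forallP => a; rewrite ?ffunE //.
  apply/forallP => b; rewrite !ffunE; apply/implyP => ab.
  by move/forallP: (Hb (lift ord0 a)) => /(_ (lift ord0 b)) /implyP; apply.
have := IH g Hg; rewrite ffunE => HD.
have := Hb ord0 => /forallP /(_ (lift ord0 ord0)) /implyP /(_ isT) /andP[h1 h2].
apply/existsP; exists (f (lift ord0 ord0)).1; apply/existsP; exists (f (lift ord0 ord0)).2.
by rewrite h1 h2.
Qed.

Lemma Dr_nest N k (P : {set {set 'I_N}}) x y :
  Dr (Ar P) N k x y -> exists f : {ffun 'I_k.+1 -> 'I_N * 'I_N},
    [/\ is_nesting P f, val (f ord0).1 = x & val (f ord0).2 = y].
Proof.
elim: k x y => [|k IH] x y /=.
  move=> HA; have /andP[xy yN] := Ar_lt HA.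
  have xN : x < N by apply: ltn_trans yN.
  exists [ffun _ => (Ordinal xN, Ordinal yN)]; split; rewrite ?ffunE //.
  apply/andP; split; apply/forallP => a; rewrite ?ffunE /= ?arcE //.
  by apply/forallP => b; case: a b => [[]] // ? [[]].
case/andP => HA /existsP[x' /existsP[y' /and3P[xx' yy' HD]]].
have [g [Hg gx gy]] := IH _ _ HD.
have /andP[xy yN] := Ar_lt HA.
have xN : x < N by apply: ltn_trans yN.
have Hg0 : forall b : 'I_k.+1, x < val (g b).1 /\ val (g b).2 < y.
  move=> b; case: (posnP b) => [b0|bpos].
    have -> : b = ord0 by apply/val_inj.
    by rewrite gx gy.
  case/andP: Hg => _ /forallP/(_ ord0)/forallP/(_ b)/implyP/(_ bpos)/andP[h1 h2].
  rewrite gx in h1; rewrite gy in h2.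
  by split; [apply: ltn_trans xx' h1|apply: ltn_trans h2 yy'].
exists [ffun a => if unlift ord0 a is Some b then g b else (Ordinal xN, Ordinal yN)].
split; rewrite ?ffunE ?unlift_none //.
case/andP: Hg => /forallP Ha /forallP Hb.
apply/andP; split; apply/forallP => a; rewrite ?ffunE.
  by case: unliftP => [b _|_] //=; rewrite arcE.
apply/forallP => b; rewrite ffunE; apply/implyP.
case: unliftP => [a' ->|->]; case: unliftP => [b' ->|->] //=.
- rewrite /= /bump /= !add1n ltnS => ab.
  by move/forallP: (Hb a') => /(_ b') /implyP; apply.
- by move=> _; have [] := Hg0 b'; move=> -> ->.
Qed.

Lemma has_nestingE N k (P : {set {set 'I_N}}) :
  has_nesting k.+1 P = [exists x : 'I_N, exists y : 'I_N, Dr (Ar P) N k x y].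
Proof.
apply/existsP/existsP => [[f Hf]|[x /existsP[y HD]]].
  by exists (f ord0).1; apply/existsP; exists (f ord0).2; apply: nest_Dr.
have [f [Hf _ _]] := Dr_nest HD; by exists f.
Qed.

Lemma nesting_minsE N k (P : {set {set 'I_N}}) (x : 'I_N) :
  (x \in nesting_mins k.+1 P) = [exists y : 'I_N, Dr (Ar P) N k x y].
Proof.
rewrite inE; apply/existsP/existsP => [[f /and3P[Hf /existsP[a /eqP fa] /forallP Hm]]|[y HD]].
  have ex : (f ord0).1 = x.
    apply/val_inj/eqP; rewrite eqn_leq Hm andbT -fa.
    case: (posnP a) => [a0|apos].
      by have -> : a = ord0 by apply/val_inj.
    case/andP: Hf => _ /forallP/(_ ord0)/forallP/(_ a)/implyP/(_ apos)/andP[h _].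
    exact: ltnW.
  by exists (f ord0).2; rewrite -ex; apply: nest_Dr.
have [f [Hf fx fy]] := Dr_nest HD.
exists f; rewrite Hf /=; apply/andP; split.
  by apply/existsP; exists ord0; apply/eqP/val_inj.
apply/forallP => a; rewrite -fx.
case: (posnP a) => [a0|apos].
  by have -> : a = ord0 by apply/val_inj.
case/andP: Hf => _ /forallP/(_ ord0)/forallP/(_ a)/implyP/(_ apos)/andP[h _].
exact: ltnW.
Qed.

Definition aboveR (a : nat -> nat -> bool) N k z :=
  [forall x : 'I_N, forall y : 'I_N, Dr a N k x y ==> (x < z)].

Lemma label_above N k (P : {set {set 'I_N}}) :
  label k.+1 P = #|[set B in P | aboveR (Ar P) N k (bmax B)]|.+1.
Proof.
rewrite /label has_nestingE.
case: existsP => [[x0 /existsP[y0 H0]]|Hn] /=; congr (_.+1); last first.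
  apply: eq_card => B; rewrite !inE; case: (B \in P) => //=; symmetry.
  apply/forallP => x; apply/forallP => y.
  by apply/implyP => HD; case: Hn; exists x; apply/existsP; exists y.
apply: eq_card => B; rewrite !inE; case: (B \in P) => //=.
have x0m : x0 \in nesting_mins k.+1 P by rewrite nesting_minsE; apply/existsP; exists y0.
apply/idP/forallP => [lt x|H].
  apply/forallP => y; apply/implyP => HD.
  apply: leq_ltn_trans lt; apply: (@leq_bigmax_cond _ _ _ x).
  by rewrite nesting_minsE; apply/existsP; exists y.
have [i0 i0m ->] := eq_bigmax_cond (fun x : 'I_N => val x) (introT card_gt0P (ex_intro _ x0 x0m)).
move: i0m; rewrite nesting_minsE => /existsP[y HD].
by move/forallP: (H i0) => /(_ y) /implyP; apply.
Qed.

Lemma Dr_old (a a' : nat -> nat -> bool) N k x y :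
  (forall x y, a x y -> x < y < N) -> (forall x y, y < N -> a' x y = a x y) ->
  y < N -> Dr a' N.+1 k x y = Dr a N k x y.
Proof.
move=> Ha Ha'; elim: k x y => [|k IH] x y yN /=; rewrite Ha' //; congr (_ && _).
apply/existsP/existsP => [[x' /existsP[y' /and3P[xx yy HD]]]|[x' /existsP[y' /and3P[xx yy HD]]]].
  have y'N : y' < N by apply: ltn_trans yy yN.
  rewrite IH // in HD; have /andP[xy _] := Ha _ _ (Dr_Ar HD).
  exists (Ordinal (ltn_trans xy y'N)); apply/existsP; exists (Ordinal y'N).
  by rewrite /= xx yy.
exists (widen_ord (leqnSn N) x'); apply/existsP; exists (widen_ord (leqnSn N) y').
by rewrite /= xx yy IH // (ltn_trans yy yN).
Qed.

Lemma Dr_new (a a' : nat -> nat -> bool) N (c : bool) b k x :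
  (forall x y, a x y -> x < y < N) ->
  (forall x y, a' x y = a x y || [&& c, x == b & y == N]) ->
  Dr a' N.+1 k x N = [&& c, x == b & ((k == 0) || ~~ aboveR a N k.-1 b.+1)].
Proof.
move=> Ha Ha'.
have aN : forall x, a x N = false by move=> x'; apply/negP => /Ha; rewrite ltnn andbF.
have Hold : forall x y, y < N -> a' x y = a x y.
  by move=> x0 y0 h; rewrite Ha' (ltn_eqF h) !andbF orbF.
case: k => [|k] /=; first by rewrite Ha' aN eqxx /= andbT.
rewrite Ha' aN eqxx /= andbT -andbA; case: c Ha' => Ha' //=; case: eqP => //= ->.
apply/existsP/negP => [[x' /existsP[y' /and3P[xx yy HD]]]|H].
  rewrite (@Dr_old a a' N k x' y' Ha Hold yy) in HD.
  have /andP[xy yN] := Ha _ _ (Dr_Ar HD).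
  move/forallP/(_ (Ordinal (ltn_trans xy yN)))/forallP/(_ (Ordinal yN))/implyP/(_ HD).
  by rewrite /= ltnS leqNgt xx.
move/negP: H; rewrite negb_forall => /existsP[x']; rewrite negb_forall => /existsP[y'].
rewrite negb_imply ltnS -ltnNge => /andP[HD bx].
exists (widen_ord (leqnSn N) x'); apply/existsP; exists (widen_ord (leqnSn N) y').
by rewrite /= bx ltn_ord /= (@Dr_old a a' N k x' y' Ha Hold (ltn_ord y')).
Qed.

Lemma above_ext (a a' : nat -> nat -> bool) N (c : bool) b k z :
  (forall x y, a x y -> x < y < N) ->
  (forall x y, a' x y = a x y || [&& c, x == b & y == N]) -> (c -> b < N) ->
  aboveR a' N.+1 k z =
  aboveR a N k z && ([&& c & ((k == 0) || ~~ aboveR a N k.-1 b.+1)] ==> (b < z)).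
Proof.
move=> Ha Ha' bN.
have Hold : forall x y, y < N -> a' x y = a x y.
  by move=> x0 y0 h; rewrite Ha' (ltn_eqF h) !andbF orbF.
apply/forallP/andP => [H|[H1 H2] x].
  split.
    apply/forallP => x; apply/forallP => y; apply/implyP => HD.
    have /andP[xy yN] := Ha _ _ (Dr_Ar HD).
    move/forallP: (H (widen_ord (leqnSn N) x)) => /(_ (widen_ord (leqnSn N) y)) /implyP; apply.
    by rewrite /= (@Dr_old a a' N k _ _ Ha Hold).
  apply/implyP => Hc.
  have bN1 : b < N.+1 by apply: ltnW; apply: bN; case/andP: Hc.
  move/forallP: (H (Ordinal bN1)) => /(_ ord_max) /implyP; apply.
  by rewrite /= (@Dr_new a a' N c b k _ Ha Ha') eqxx.
apply/forallP => y; apply/implyP => HD.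
have := ltn_ord y; rewrite ltnS leq_eqVlt => /orP[/eqP yN|yN].
  rewrite yN (@Dr_new a a' N c b k _ Ha Ha') in HD.
  case/and3P: HD => Hc /eqP -> Hk; by move/implyP: H2; apply; rewrite Hc.
rewrite (@Dr_old a a' N k _ _ Ha Hold yN) in HD.
have /andP[xy _] := Ha _ _ (Dr_Ar HD).
move/forallP: H1 => /(_ (Ordinal (ltn_trans xy yN))) /forallP /(_ (Ordinal yN)) /implyP; apply.
exact: HD.
Qed.

Lemma above_mono_z a N k z z' : z <= z' -> aboveR a N k z -> aboveR a N k z'.
Proof.
move=> zz /forallP H; apply/forallP => x; apply/forallP => y; apply/implyP => HD.
by move/forallP: (H x) => /(_ y) /implyP /(_ HD) /leq_trans; apply.
Qed.

Lemma above_mono_k a N k z : aboveR a N k z -> aboveR a N k.+1 z.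
Proof.
move=> /forallP H; apply/forallP => x; apply/forallP => y; apply/implyP => /= /andP[_].
case/existsP => x' /existsP[y' /and3P[xx _ HD]].
by move/forallP: (H x') => /(_ y') /implyP /(_ HD); apply: ltn_trans.
Qed.

Lemma above_mono_k' a N k k' z : k <= k' -> aboveR a N k z -> aboveR a N k' z.
Proof.
move=> /subnKC <-; elim: (k' - k) => [|d IH]; first by rewrite addn0.
by move=> H; rewrite addnS; apply: above_mono_k; apply: IH.
Qed.

Lemma above_top a N k : aboveR a N k N.
Proof. by apply/forallP => x; apply/forallP => y; rewrite ltn_ord implybT. Qed.

Lemma disj_intro (T : finType) (A B : {set T}) :
  (forall x, x \in A -> x \in B -> False) -> [disjoint A & B].
Proof. by move=> H; apply/pred0P => x /=; apply/negP => /andP[]; apply: H. Qed.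

Definition wid n (x : 'I_n) : 'I_n.+1 := lift ord_max x.
Definition wset n (B : {set 'I_n}) : {set 'I_n.+1} := [set wid x | x in B].
Definition gB n (B0 B : {set 'I_n}) : {set 'I_n.+1} :=
  wset B :|: (if B == B0 then [set ord_max] else set0).
Definition ext n (P : {set {set 'I_n}}) (o : option {set 'I_n}) : {set {set 'I_n.+1}} :=
  if o is Some B0 then [set gB B0 B | B in P]
  else [set wset B | B in P] :|: [set [set ord_max]].
Definition restr n (B' : {set 'I_n.+1}) : {set 'I_n} := [set x | wid x \in B'].
Definition res n (P' : {set {set 'I_n.+1}}) : {set {set 'I_n}} :=
  [set restr B' | B' in P'] :\ set0.
Definition cho n (P' : {set {set 'I_n.+1}}) : option {set 'I_n} :=
  if restr (pblock P' ord_max) == set0 then None else Some (restr (pblock P' ord_max)).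
Definition valid n (P : {set {set 'I_n}}) (o : option {set 'I_n}) : bool :=
  if o is Some B0 then B0 \in P else true.

Lemma val_wid n (x : 'I_n) : nat_of_ord (wid x) = nat_of_ord x.
Proof. exact: lift_max. Qed.
Lemma val_wid' n (x : 'I_n) : val (wid x) = val x.
Proof. exact: lift_max. Qed.

Lemma wid_inj n : injective (@wid n).
Proof. exact: lift_inj. Qed.

Variant wid_spec n : 'I_n.+1 -> Type :=
  | WidMax : wid_spec ord_max
  | WidWid x : wid_spec (wid x).

Lemma widP n (y : 'I_n.+1) : wid_spec y.
Proof. by case: (unliftP ord_max y) => [x ->|->]; constructor. Qed.

Lemma max_wid n (x : 'I_n) : (ord_max == wid x) = false.
Proof. by apply/negbTE/neq_lift. Qed.
Lemma wid_max n (x : 'I_n) : (wid x == ord_max) = false.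
Proof. by rewrite eq_sym max_wid. Qed.

Lemma mem_wset n (B : {set 'I_n}) x : (wid x \in wset B) = (x \in B).
Proof. by rewrite mem_imset //; apply: wid_inj. Qed.

Lemma max_wset n (B : {set 'I_n}) : (ord_max \in wset B) = false.
Proof. by apply/negbTE/negP => /imsetP[x _ /eqP]; rewrite max_wid. Qed.

Lemma mem_gB n (B0 B : {set 'I_n}) x : (wid x \in gB B0 B) = (x \in B).
Proof. by rewrite /gB inE mem_wset; case: (B == B0); rewrite ?inE ?wid_max orbF. Qed.

Lemma max_gB n (B0 B : {set 'I_n}) : (ord_max \in gB B0 B) = (B == B0).
Proof. by rewrite /gB inE max_wset; case: (B == B0); rewrite ?inE ?eqxx. Qed.

Lemma restr_wset n (B : {set 'I_n}) : restr (wset B) = B.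
Proof. by apply/setP => x; rewrite inE mem_wset. Qed.

Lemma restr_gB n (B0 B : {set 'I_n}) : restr (gB B0 B) = B.
Proof. by apply/setP => x; rewrite inE mem_gB. Qed.

Lemma restr_max n : restr [set @ord_max n] = set0.
Proof. by apply/setP => x; rewrite !inE wid_max. Qed.

Lemma gB_inj n (B0 : {set 'I_n}) : injective (gB B0).
Proof. by move=> B C e; rewrite -(restr_gB B0 B) e restr_gB. Qed.

Lemma wset_inj n : injective (@wset n).
Proof. by move=> B C e; rewrite -(restr_wset B) e restr_wset. Qed.

Lemma partition_ext n (P : {set {set 'I_n}}) o :
  partition P [set: 'I_n] -> valid P o -> partition (ext P o) [set: 'I_n.+1].
Proof.
case/and3P => /eqP cov /trivIsetP triv P0 vo.
have inP : forall x : 'I_n, exists2 B, B \in P & x \in B.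
  move=> x; have : x \in cover P by rewrite cov inE.
  by case/bigcupP => B BP xB; exists B.
have ne : forall B, B \in P -> exists x, x \in B.
  move=> B BP; case: (set_0Vmem B) => [E|[x xB]]; last by exists x.
  by rewrite E in BP; rewrite BP in P0.
case: o vo => [B0|] /= vo; apply/and3P; split.
- apply/eqP/setP => y; rewrite inE; apply/bigcupP; case: (widP y) => [|x].
    by exists (gB B0 B0); [apply: imset_f|rewrite max_gB].
  by have [B BP xB] := inP x; exists (gB B0 B); [apply: imset_f|rewrite mem_gB].
- apply/trivIsetP => A C /imsetP[B1 B1P ->] /imsetP[B2 B2P ->] ne12.
  have n12 : B1 != B2 by apply: contraNneq ne12 => ->.
  apply: disj_intro => y; case: (widP y) => [|x].
    by rewrite !max_gB => /eqP e1 /eqP e2; rewrite e1 e2 eqxx in n12.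
  rewrite !mem_gB => x1 x2.
  by move/disjointFr: (triv _ _ B1P B2P n12) => /(_ _ x1); rewrite x2.
- apply/imsetP => -[B BP E]; have [x xB] := ne B BP.
  by move: (mem_gB B0 B x); rewrite -E inE xB.
- apply/eqP/setP => y; rewrite inE; apply/bigcupP; case: (widP y) => [|x].
    by exists [set ord_max]; rewrite !inE ?eqxx ?orbT.
  by have [B BP xB] := inP x; exists (wset B); [rewrite inE imset_f|rewrite mem_wset].
- apply/trivIsetP => A C; rewrite !inE.
  case/orP => [/imsetP[B1 B1P ->]|/eqP ->]; case/orP => [/imsetP[B2 B2P ->]|/eqP ->] neAC.
  + have n12 : B1 != B2 by apply: contraNneq neAC => ->.
    apply: disj_intro => y; case: (widP y) => [|x]; first by rewrite max_wset.
    rewrite !mem_wset => x1 x2.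
    by move/disjointFr: (triv _ _ B1P B2P n12) => /(_ _ x1); rewrite x2.
  + by apply: disj_intro => y; case: (widP y) => [|x]; rewrite ?max_wset // inE wid_max.
  + by apply: disj_intro => y; case: (widP y) => [|x]; rewrite ?max_wset // inE wid_max.
  + by rewrite eqxx in neAC.
- rewrite !inE negb_or; apply/andP; split.
    apply/imsetP => -[B BP E]; have [x xB] := ne B BP.
    by move: (mem_wset B x); rewrite -E inE xB.
  by apply/eqP => /setP/(_ ord_max); rewrite !inE eqxx.
Qed.

Lemma res_ext n (P : {set {set 'I_n}}) o : set0 \notin P -> res (ext P o) = P.
Proof.
move=> P0; apply/setP => B; rewrite /res !inE; apply/andP/idP => [[Bn /imsetP[B' HB' EB]]|BP].
  subst B; case: o HB' Bn => [B0|] /=; first by case/imsetP => C CP ->; rewrite restr_gB.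
  rewrite !inE => /orP[/imsetP[C CP ->]|/eqP ->]; first by rewrite restr_wset.
  by rewrite restr_max eqxx.
split; first by apply: contraNneq P0 => <-.
case: o => [B0|] /=.
  by apply/imsetP; exists (gB B0 B); [apply: imset_f|rewrite restr_gB].
apply/imsetP; exists (wset B); last by rewrite restr_wset.
by rewrite inE imset_f.
Qed.

Lemma cho_ext n (P : {set {set 'I_n}}) o :
  partition P [set: 'I_n] -> valid P o -> cho (ext P o) = o.
Proof.
move=> pP vo; have /and3P[_ triv _] := partition_ext pP vo.
case/and3P: pP => _ _ P0.
rewrite /cho; case: o vo triv => [B0|] /= B0P triv.
  rewrite (@def_pblock _ _ (gB B0 B0)) //; last by rewrite max_gB.
    rewrite restr_gB; case: eqP => // E; by rewrite E in B0P; rewrite B0P in P0.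
  exact: imset_f.
rewrite (@def_pblock _ _ [set ord_max]) ?restr_max ?eqxx //.
  by rewrite !inE eqxx orbT.
by rewrite inE.
Qed.

Lemma decomp n (B' : {set 'I_n.+1}) :
  B' = wset (restr B') :|: (if ord_max \in B' then [set ord_max] else set0).
Proof.
apply/setP => y; rewrite inE; case: (widP y) => [|x].
  by rewrite max_wset /=; case: (ord_max \in B'); rewrite !inE ?eqxx.
by rewrite mem_wset inE; case: (ord_max \in B'); rewrite !inE ?wid_max ?orbF.
Qed.

Lemma ext_res n (P' : {set {set 'I_n.+1}}) :
  partition P' [set: 'I_n.+1] ->
  [/\ partition (res P') [set: 'I_n], valid (res P') (cho P') & ext (res P') (cho P') = P'].
Proof.
case/and3P => /eqP cov triv P0; have /trivIsetP trivP := triv.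
have covx : forall y, y \in cover P' by move=> y; rewrite cov inE.
set Bs := pblock P' ord_max.
have BsP : Bs \in P' by apply: pblock_mem.
have mBs : ord_max \in Bs by rewrite mem_pblock.
have other : forall B', B' \in P' -> B' != Bs -> ord_max \notin B'.
  move=> B' BP ne; apply/negP => mB; move: ne; by rewrite /Bs (def_pblock triv BP mB) eqxx.
have nonemp : forall B', B' \in P' -> ord_max \notin B' -> restr B' != set0.
  move=> B' BP nm; case: (set_0Vmem B') => [E|[y yB]]; first by rewrite E in BP; rewrite BP in P0.
  case: (widP y) yB nm => [->//|x xB _]; apply/set0Pn; exists x; by rewrite inE.
have pres : partition (res P') [set: 'I_n].
  apply/and3P; split.
  - apply/eqP/setP => x; rewrite inE; apply/bigcupP.
    have /bigcupP[B' BP xB] := covx (wid x).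
    exists (restr B'); last by rewrite inE.
    rewrite /res !inE imset_f // andbT; apply/set0Pn; exists x; by rewrite inE.
  - apply/trivIsetP => A C; rewrite /res !inE => /andP[_ /imsetP[B1 B1P ->]] /andP[_ /imsetP[B2 B2P ->]] ne.
    have n12 : B1 != B2 by apply: contraNneq ne => ->.
    apply: disj_intro => x; rewrite !inE => x1 x2.
    by move/disjointFr: (trivP _ _ B1P B2P n12) => /(_ _ x1); rewrite x2.
  - by rewrite /res !inE eqxx.
split => //.
  rewrite /cho; case: eqP => //= /eqP ne.
  by rewrite /res !inE ne imset_f.
rewrite /cho; case: eqP => [R0|/eqP Rn] /=.
  have BsE : Bs = [set ord_max].
    by rewrite [LHS]decomp R0 mBs /wset imset0 set0U.
  have oE : forall B', B' \in P' -> B' != Bs -> wset (restr B') = B'.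
    by move=> B' BP ne; rewrite [RHS]decomp (negbTE (other _ BP ne)) setU0.
  apply/setP => A; rewrite !inE; apply/idP/idP.
    case/orP => [/imsetP[R /setD1P[Rn /imsetP[B' BP ER]] EA]|/eqP ->]; last by rewrite -BsE.
    subst A R; rewrite oE //; apply: contraNneq Rn => ->; by rewrite /Bs R0.
  move=> AP; case: (eqVneq A Bs) => [->|ne]; first by rewrite BsE eqxx orbT.
  apply/orP; left; apply/imsetP; exists (restr A); last by rewrite oE.
  by rewrite /res !inE nonemp ?other // imset_f.
set R := restr Bs in Rn *.
have gE : forall B', B' \in P' -> gB R (restr B') = B'.
  move=> B' BP; case: (eqVneq B' Bs) => [->|ne].
    by rewrite /gB eqxx [RHS]decomp mBs.
  rewrite /gB ifF; last first.
    apply/negP => /eqP E; have /set0Pn[x xR] := Rn.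
    have xB : wid x \in B' by move: xR; rewrite -E inE.
    have xBs : wid x \in Bs by move: xR; rewrite /R inE.
    by move/disjointFr: (trivP _ _ BP BsP ne) => /(_ _ xB); rewrite xBs.
  by rewrite [RHS]decomp (negbTE (other _ BP ne)).
apply/setP => A; apply/idP/idP.
  by case/imsetP => R' /setD1P[_ /imsetP[B' BP ER]] EA; subst A R'; rewrite gE.
move=> AP; apply/imsetP; exists (restr A); last by rewrite gE.
rewrite /res !inE imset_f // andbT.
case: (eqVneq A Bs) => [->//|ne]; exact: nonemp (other _ AP ne).
Qed.

Lemma arcBP N (B : {set 'I_N}) i j :
  reflect (exists i' j', [/\ i' \in B, j' \in B, val i' = i, val j' = j &
             i < j /\ forall k, k \in B -> ~~ ((i < val k) && (val k < j))])
          (arcB B i j).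
Proof.
apply: (iffP existsP) => [[i' /andP[i'B /existsP[j' /andP[j'B /and4P[/eqP ei /eqP ej ij /forallP H]]]]]|].
  exists i', j'; split => //; split => // k kB; move/implyP: (H k); exact.
move=> [i' [j' [i'B j'B ei ej [ij H]]]]; exists i'; rewrite i'B /=; apply/existsP; exists j'.
rewrite j'B ei ej !eqxx ij /=; apply/forallP => k; apply/implyP; exact: H.
Qed.

Lemma arcB_wset n (B : {set 'I_n}) i j : arcB (wset B) i j = arcB B i j.
Proof.
apply/arcBP/arcBP => [[i' [j' [/imsetP[x xB ->] /imsetP[y yB ->] ei ej [ij H]]]]|[x [y [xB yB ei ej [ij H]]]]].
  rewrite ?val_wid ?val_wid' in ei ej.
  exists x, y; split => //; split => // k kB.
  by have := H (wid k); rewrite mem_wset ?val_wid ?val_wid'; apply.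
exists (wid x), (wid y); rewrite !mem_wset ?val_wid ?val_wid'; split => //; split => // k /imsetP[k' k'B ->].
by rewrite ?val_wid ?val_wid'; apply: H.
Qed.

Lemma bmax_ub n (B : {set 'I_n}) x : x \in B -> val x <= bmax B.
Proof. by move=> xB; apply: (@leq_bigmax_cond _ _ (fun x : 'I_n => val x) x). Qed.

Lemma bmax_mem n (B : {set 'I_n}) : B != set0 -> exists2 x, x \in B & val x = bmax B.
Proof.
move=> /set0Pn[x0 x0B].
have [i0 i0B E] := eq_bigmax_cond (fun x : 'I_n => val x) (introT card_gt0P (ex_intro _ x0 x0B)).
by exists i0 => //; rewrite /bmax E.
Qed.

Lemma bmax_lt n (B : {set 'I_n}) : B != set0 -> bmax B < n.
Proof. by move=> /bmax_mem[x _ <-]; apply: ltn_ord. Qed.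

Lemma arcB_max n (B : {set 'I_n}) i j : B != set0 ->
  arcB (wset B :|: [set ord_max]) i j = arcB B i j || ((i == bmax B) && (j == n)).
Proof.
move=> Bn; have [xm xmB exm] := bmax_mem Bn.
apply/arcBP/orP => [[i' [j' [i'B j'B ei ej [ij H]]]]|].
  subst i j; move: i'B j'B ij H; case: (widP i') => [|x]; case: (widP j') => [|y].
  - by rewrite ltnn.
  - move=> _ _; rewrite ?val_wid ?val_wid' => ij.
    by have := ltn_ord y; move/(ltn_trans ij); rewrite /= ltnn.
  - rewrite !inE mem_wset wid_max orbF ?val_wid ?val_wid' /= => xB _ ij H; right; rewrite eqxx andbT.
    rewrite eqn_leq bmax_ub //=; rewrite leqNgt; apply/negP => lt.
    have := H (wid xm); rewrite inE mem_wset xmB => /(_ isT); rewrite ?val_wid ?val_wid' exm lt /=.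
    by rewrite bmax_lt.
  - rewrite !inE !mem_wset !wid_max !orbF ?val_wid ?val_wid' => xB yB ij H; left; apply/arcBP.
    exists x, y; split => //; split => // k kB; have := H (wid k).
    by rewrite inE mem_wset kB ?val_wid ?val_wid' => /(_ isT).
case=> [/arcBP[x [y [xB yB ei ej [ij H]]]]|/andP[/eqP ei /eqP ej]].
  exists (wid x), (wid y); rewrite !inE !mem_wset xB yB ?val_wid ?val_wid'; split => //; split => // k.
  rewrite inE; case: (widP k) => [|k']; rewrite ?mem_wset ?wid_max ?max_wset ?orbF.
    move=> _; apply/negP => /andP[_ h]; rewrite -ej in h.
    by have := ltn_trans h (ltn_ord y); rewrite /= ltnn.
  rewrite inE wid_max orbF ?val_wid ?val_wid' => kB; exact: H.
subst i j; exists (wid xm), ord_max; rewrite !inE mem_wset xmB eqxx orbT ?val_wid ?val_wid'.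
split => //; split; first by rewrite -exm ltn_ord.
move=> k; rewrite inE; case: (widP k) => [|k']; rewrite ?mem_wset ?wid_max ?max_wset.
  by rewrite /= ltnn andbF.
rewrite inE wid_max orbF val_wid' => k'B; by rewrite ltnNge bmax_ub.
Qed.

Lemma arcB_single n i j : arcB [set @ord_max n] i j = false.
Proof.
apply/arcBP => -[i' [j' [i'B j'B ei ej [ij _]]]].
by move: i'B j'B; rewrite !inE => /eqP E1 /eqP E2; rewrite -ei -ej E1 E2 ltnn in ij.
Qed.

Lemma ex_imset (T U : finType) (f : T -> U) (A : {set T}) (q : U -> bool) :
  [exists y in f @: A, q y] = [exists x in A, q (f x)].
Proof.
apply/existsP/existsP => [[y /andP[/imsetP[x xA ->] qy]]|[x /andP[xA qx]]].
  by exists x; rewrite xA.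
by exists (f x); rewrite imset_f.
Qed.

Definition isS (T : Type) (o : option T) : bool := if o is Some _ then true else false.
Definition bo n (o : option {set 'I_n}) : nat := if o is Some B0 then bmax B0 else 0.

Lemma Ar_ext n (P : {set {set 'I_n}}) o i j :
  partition P [set: 'I_n] -> valid P o ->
  Ar (ext P o) i j = Ar P i j || [&& isS o, i == bo o & j == n].
Proof.
case/and3P => _ _ P0; case: o => [B0|] /= vo.
  rewrite /Ar ex_imset; apply/existsP/orP => [[B /andP[BP]]|].
    rewrite /gB; case: eqP => [EB|_]; last first.
      by rewrite setU0 arcB_wset => a; left; apply/existsP; exists B; rewrite BP.
    subst B; rewrite arcB_max; last by apply: contraNneq P0 => <-.
    by case/orP => [a|->]; [left; apply/existsP; exists B0; rewrite BP|right].
  case => [/existsP[B /andP[BP a]]|/andP[ei ej]].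
    exists B; rewrite BP /gB; case: eqP => [EB|_]; last by rewrite setU0 arcB_wset.
    by subst B; rewrite arcB_max ?a //; apply: contraNneq P0 => <-.
  exists B0; rewrite vo /gB eqxx arcB_max ?ei ?ej ?orbT //; by apply: contraNneq P0 => <-.
rewrite orbF /Ar; apply/existsP/existsP => [[B' /andP[]]|[B /andP[BP a]]].
  rewrite !inE => /orP[/imsetP[B BP ->]|/eqP ->]; last by rewrite arcB_single.
  by rewrite arcB_wset => a; exists B; rewrite BP.
by exists (wset B); rewrite !inE imset_f //= arcB_wset.
Qed.

Lemma Ar_bmax n (P : {set {set 'I_n}}) B0 y :
  partition P [set: 'I_n] -> B0 \in P -> Ar P (bmax B0) y = false.
Proof.
case/and3P => _ /trivIsetP triv P0 B0P; apply/negbTE/negP => /existsP[C /andP[CP /arcBP[i' [j' [i'C j'C ei ej [ij _]]]]]].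
have B0n : B0 != set0 by apply: contraNneq P0 => <-.
have [xm xmB exm] := bmax_mem B0n.
have xi : xm = i' by apply/val_inj; rewrite exm ei.
subst xm.
case: (eqVneq C B0) => [EC|ne]; last first.
  by move/disjointFr: (triv _ _ CP B0P ne) => /(_ _ i'C); rewrite xmB.
subst C; have := bmax_ub j'C; by rewrite ej leqNgt -ei exm ij.
Qed.

Lemma above_succ n (P : {set {set 'I_n}}) B0 k :
  partition P [set: 'I_n] -> B0 \in P ->
  aboveR (Ar P) n k (bmax B0).+1 = aboveR (Ar P) n k (bmax B0).
Proof.
move=> pP B0P; apply/idP/idP; last by apply: above_mono_z.
move/forallP => H; apply/forallP => x; apply/forallP => y; apply/implyP => HD.
move/forallP: (H x) => /(_ y) /implyP /(_ HD); rewrite ltnS leq_eqVlt => /orP[/eqP E|//].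
by move: (Dr_Ar HD); rewrite E Ar_bmax.
Qed.

Definition ab n (P : {set {set 'I_n}}) k z := aboveR (Ar P) n k z.

Lemma ab_ext n (P : {set {set 'I_n}}) o k z :
  partition P [set: 'I_n] -> valid P o ->
  ab (ext P o) k z =
  ab P k z && ([&& isS o & (k == 0) || ~~ ab P k.-1 (bo o).+1] ==> (bo o < z)).
Proof.
move=> pP vo; apply: above_ext.
- exact: Ar_lt.
- by move=> x y; apply: Ar_ext.
- case: o vo => [B0|] //= B0P _; apply: bmax_lt.
  case/and3P: pP => _ _ P0; by apply: contraNneq P0 => <-.
Qed.

Lemma ab0 n (P : {set {set 'I_n}}) k : ab P k 0 = ~~ has_nesting k.+1 P.
Proof.
rewrite has_nestingE /ab /aboveR; apply/forallP/negP => [H /existsP[x /existsP[y HD]]|H x].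
  by move/forallP: (H x) => /(_ y) /implyP /(_ HD).
apply/forallP => y; apply/implyP => HD; case: H; apply/existsP; exists x; apply/existsP; by exists y.
Qed.

Lemma card_imset_sel (T U : finType) (f : T -> U) (A : {set T}) (q : U -> bool) :
  injective f -> #|[set y in f @: A | q y]| = #|[set x in A | q (f x)]|.
Proof.
move=> fi; rewrite -(card_imset _ fi); apply: eq_card => y; rewrite !inE.
apply/andP/imsetP => [[/imsetP[x xA ->] qy]|[x]]; first by exists x; rewrite // inE xA.
by rewrite inE => /andP[xA qx] ->; rewrite imset_f.
Qed.

Lemma card_sel_or (T : finType) (A : {set T}) (a : T) (q : T -> bool) : a \in A ->
  #|[set x in A | (x == a) || q x]| = #|[set x in A | q x]| + ~~ q a.
Proof.
move=> aA; case qa: (q a) => /=.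
  rewrite addn0; apply: eq_card => x; rewrite !inE; case: eqP => // ->; by rewrite qa.
rewrite (_ : [set x in A | (x == a) || q x] = a |: [set x in A | q x]).
  by rewrite cardsU1 !inE qa andbF addnC.
apply/setP => x; rewrite !inE; by case: eqP => // ->; rewrite aA.
Qed.

Lemma bmax_wset n (B : {set 'I_n}) : bmax (wset B) = bmax B.
Proof.
rewrite /bmax /wset big_imset; last by move=> x y _ _; apply: wid_inj.
by apply: eq_bigr => x _; apply: val_wid'.
Qed.

Lemma bmax_top n (B : {set 'I_n.+1}) : ord_max \in B -> bmax B = n.
Proof.
move=> mB; apply/eqP; rewrite eqn_leq; apply/andP; split.
  by apply/bigmax_leqP => x _; rewrite -ltnS ltn_ord.
exact: (@leq_bigmax_cond _ _ (fun x : 'I_n.+1 => val x) ord_max).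
Qed.

Lemma bmax_gB n (B0 B : {set 'I_n}) : bmax (gB B0 B) = if B == B0 then n else bmax B.
Proof.
case: eqP => [->|ne]; first by apply: bmax_top; rewrite max_gB.
by rewrite /gB (introF eqP ne) setU0 bmax_wset.
Qed.

Lemma single_notin n (P : {set {set 'I_n}}) : [set ord_max] \notin [set wset B | B in P].
Proof.
apply/imsetP => -[B _ /setP /(_ ord_max)]; by rewrite inE eqxx max_wset.
Qed.

Lemma label_single n (P : {set {set 'I_n}}) k :
  partition P [set: 'I_n] -> label k.+1 (ext P None) = (label k.+1 P).+1.
Proof.
move=> pP; rewrite !label_above; congr _.+1.
have hq : forall z, aboveR (Ar (ext P None)) n.+1 k z = aboveR (Ar P) n k z.
  by move=> z; have := ab_ext k z pP (isT : valid P None); rewrite /ab => ->; rewrite andbT.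
have -> : [set B in ext P None | aboveR (Ar (ext P None)) n.+1 k (bmax B)] =
          [set ord_max] |: [set B in [set wset B | B in P] | aboveR (Ar P) n k (bmax B)].
  apply/setP => B; rewrite !inE hq; case: (eqVneq B [set ord_max]) => [->|ne].
    by rewrite orbT (bmax_top (set11 _)) above_top.
  by rewrite orbF.
rewrite cardsU1 inE (negbTE (single_notin P)) /= add1n; congr _.+1.
by rewrite (card_imset_sel _ _ (@wset_inj n)); apply: eq_card => B; rewrite !inE bmax_wset.
Qed.

Lemma label_attach n (P : {set {set 'I_n}}) B0 j0 k :
  partition P [set: 'I_n] -> B0 \in P ->
  ab P j0 (bmax B0) -> (j0 == 0) || ~~ ab P j0.-1 (bmax B0) ->
  label k.+1 (ext P (Some B0)) =
  if k < j0 then (label k.+1 P).+1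
  else if k == j0 then (#|[set B in P | bmax B0 < bmax B]|).+2
  else label k.+1 P.
Proof.
move=> pP B0P h1 h2.
have B0n : B0 != set0 by case/and3P: pP => _ _ P0; apply: contraNneq P0 => <-.
set b := bmax B0.
have suc : forall k, ab P k b.+1 = ab P k b by move=> k'; apply: above_succ.
rewrite !label_above (card_imset_sel _ _ (@gB_inj n B0)).
set C := (k == 0) || ~~ ab P k.-1 b.
pose q := fun B : {set 'I_n} => ab P k (bmax B) && (C ==> (b < bmax B)).
have -> : [set B in P | aboveR (Ar (ext P (Some B0))) n.+1 k (bmax (gB B0 B))] =
          [set B in P | (B == B0) || q B].
  apply/setP => B; rewrite !inE; congr (_ && _).
  change (aboveR (Ar (ext P (Some B0))) n.+1 k (bmax (gB B0 B))) with (ab (ext P (Some B0)) k (bmax (gB B0 B))).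
  rewrite (ab_ext _ _ pP (B0P : valid P (Some B0))) /= bmax_gB -/b suc.
  case: eqP => [_|_] /=; last by rewrite /q /C.
  by rewrite /ab above_top /b (bmax_lt B0n) implybT.
rewrite card_sel_or //.
have mono : forall k1 k2 z, k1 <= k2 -> ab P k1 z -> ab P k2 z by move=> k1 k2 z kk; apply: above_mono_k'.
case: ltngtP => [kj|jk|kj].
- have nab : forall k', k' <= k -> ~~ ab P k' b.
    move=> k' kk; apply/negP => H.
    have j0n : j0 != 0 by rewrite -lt0n; apply: leq_ltn_trans kj.
    move: h2; rewrite (negbTE j0n) /= => /negP; apply; apply: mono H.
    by rewrite -ltnS prednK ?lt0n // (leq_ltn_trans kk kj).
  have HC : C by rewrite /C; case: eqP => //= _; apply: nab; exact: leq_pred.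
  have -> : ~~ q B0 by apply/negP => /andP[H _]; move: (nab k (leqnn k)); rewrite /b H.
  rewrite addn1; congr _.+2; apply: eq_card => B; rewrite !inE; congr (_ && _).
  rewrite /q HC /= -/(ab P k (bmax B)).
  case abB: (ab P k (bmax B)) => //=.
  rewrite ltnNge; apply/negP => le; move: (nab k (leqnn k)).
  by move/negP; apply; apply: (above_mono_z le abB).
- have k0 : k != 0 by rewrite -lt0n; apply: leq_ltn_trans jk.
  have abk : ab P k.-1 b by apply: mono h1; rewrite -ltnS prednK // lt0n.
  have HC : ~~ C by rewrite /C (negbTE k0) abk.
  have qB0 : q B0 by rewrite /q (negbTE HC) andbT; apply: mono h1; apply: ltnW.
  rewrite qB0 addn0; congr _.+1; apply: eq_card => B; rewrite !inE; congr (_ && _).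
  by rewrite /q (negbTE HC) andbT.
- subst k; have HC : C by [].
  have qB0 : ~~ q B0 by rewrite /q HC /= ltnn andbF.
  rewrite qB0 addn1; congr _.+2; apply: eq_card => B; rewrite !inE; congr (_ && _).
  rewrite /q HC /=; case: ltnP => [lt|]; last by rewrite andbF.
  by rewrite andbT; apply: (above_mono_z (ltnW lt) h1).
Qed.

Lemma Pim_ext m n (P : {set {set 'I_n}}) o : 0 < m ->
  partition P [set: 'I_n] -> valid P o ->
  Pim m (ext P o) = Pim m P && ~~ (isS o && ~~ ab P m.-1 (bo o)).
Proof.
move=> m0 pP vo; rewrite /Pim /set_partition (partition_ext pP vo) pP /= -!ab0.
rewrite ab_ext // ltn0 implybF; congr (_ && ~~ _).
rewrite (negbTE (lt0n_neq0 m0)) /=; case: o vo => [B0|] //= B0P.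
by rewrite /ab above_succ.
Qed.


Local Open Scope ring_scope.

Definition upc (A : pred nat) := forall x y, (x <= y)%N -> A x -> A y.

Lemma rank_seq (R : comNzRingType) (X : R) (A1 A2 : pred nat) (t : seq nat) :
  upc A1 -> upc A2 -> (forall x, A1 x -> A2 x) -> uniq t -> sorted geq t ->
  (X - 1) * \sum_(x <- t | A2 x && ~~ A1 x) X ^+ count (fun y => x < y)%N t =
  X ^+ count A2 t - X ^+ count A1 t.
Proof.
move=> u1 u2 u12; elim: t => [|M t IH]; first by rewrite big_nil mulr0 subrr.
rewrite cons_uniq => /andP[Mt ut] st.
have st' : sorted geq t by apply: (path_sorted st).
have le : forall y, y \in t -> (y < M)%N.
  move=> y yt; have := order_path_min (rev_trans leq_trans) st.
  move/allP/(_ y yt); rewrite leq_eqVlt => /orP[/eqP E|//].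
  by move: yt; rewrite E (negbTE Mt).
have cM : count (fun y => M < y)%N (M :: t) = 0%N.
  rewrite /= ltnn /=; apply/eqP; rewrite -leqn0 leqNgt -has_count; apply/hasP => -[y yt].
  by rewrite ltnNge (ltnW (le y yt)).
have cx : forall x, x \in t -> count (fun y => x < y)%N (M :: t) = (count (fun y => x < y)%N t).+1.
  by move=> x xt /=; rewrite le.
rewrite big_cons cM expr0.
have Ht : \sum_(x <- t | A2 x && ~~ A1 x) X ^+ count (fun y => x < y)%N (M :: t) =
          X * \sum_(x <- t | A2 x && ~~ A1 x) X ^+ count (fun y => x < y)%N t.
  rewrite big_distrr big_seq_cond [RHS]big_seq_cond.
  by apply: eq_bigr => x /andP[xt _]; rewrite cx // exprS.
rewrite Ht; have IH' := IH ut st'.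
have c0 : forall A : pred nat, upc A -> ~~ A M -> count A t = 0%N.
  move=> A uA nAM; apply/eqP; rewrite -leqn0 leqNgt -has_count; apply/hasP => -[y yt Ay].
  by move: nAM; rewrite (uA _ _ (ltnW (le y yt)) Ay).
case A1M: (A1 M).
  have A2M : A2 M by apply: u12.
  by rewrite /= A1M A2M /= !add1n !exprS mulrCA IH' mulrBr.
case A2M: (A2 M) => /=.
  rewrite A1M A2M (c0 A1 u1 (negbT A1M)) /= add0n add1n exprS expr0 in IH' *.
  rewrite mulrDr mulr1 mulrCA IH' mulrBr mulr1.
  by rewrite addrC addrA subrK.
rewrite A1M A2M (c0 A1 u1 (negbT A1M)) (c0 A2 u2 (negbT A2M)) /= in IH' *.
by rewrite mulrCA IH' subrr mulr0.
Qed.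

Lemma rank_set (R : comNzRingType) (X : R) (T : finType) (P : {set T}) (f : T -> nat)
    (A1 A2 : pred nat) :
  {in P &, injective f} -> upc A1 -> upc A2 -> (forall x, A1 x -> A2 x) ->
  (X - 1) * \sum_(B in P | A2 (f B) && ~~ A1 (f B)) X ^+ #|[set C in P | (f B < f C)%N]| =
  X ^+ #|[set B in P | A2 (f B)]| - X ^+ #|[set B in P | A1 (f B)]|.
Proof.
move=> fi u1 u2 u12.
have cE : forall q : pred nat, #|[set C in P | q (f C)]| = count q (map f (enum P)).
  move=> q; rewrite count_map -sum1_count big_enum_cond -sum1_card.
  by apply: eq_bigl => C; rewrite inE.
set s := map f (enum P).
have us : uniq s by rewrite map_inj_in_uniq ?enum_uniq // => x y; rewrite !mem_enum; apply: fi.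
have -> : \sum_(B in P | A2 (f B) && ~~ A1 (f B)) X ^+ #|[set C in P | (f B < f C)%N]| =
          \sum_(x <- s | A2 x && ~~ A1 x) X ^+ count (fun y => x < y)%N s.
  rewrite big_map -big_enum_cond; apply: eq_bigr => B _.
  by rewrite (cE (fun y => f B < y)%N).
rewrite !cE -/s.
have pt : perm_eq (sort geq s) s by rewrite perm_sort.
rewrite -(perm_big _ pt) -!(permP pt).
under eq_bigr => x _ do rewrite -(permP pt).
apply: rank_seq => //; first by rewrite sort_uniq.
apply: sort_sorted => x y; exact: leq_total.
Qed.

Definition wP m n (P : {set {set 'I_n}}) : {mpoly int[m]} :=
  \prod_(j < m) 'X_j ^+ label j.+1 P.
Definition rest m n (P : {set {set 'I_n}}) (j : 'I_m) : {mpoly int[m]} :=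
  \prod_(i < m | i != j) 'X_i ^+ label i.+1 P.
Definition cls n (P : {set {set 'I_n}}) (j : nat) (B : {set 'I_n}) : bool :=
  ab P j (bmax B) && ((j == 0)%N || ~~ ab P j.-1 (bmax B)).
Definition rk n (P : {set {set 'I_n}}) (B : {set 'I_n}) : nat :=
  #|[set C in P | (bmax B < bmax C)%N]|.
Definition Qd m (j : 'I_m) n : {mpoly int[m]} :=
  \sum_(P : {set {set 'I_n}} | Pim m P)
     \sum_(B in P | cls P j B) rest P j * 'X_j ^+ (rk P B).+1.

Lemma subst_prod m (f : 'I_m -> {mpoly int[m]}) (e : 'I_m -> nat) :
  subst_vars f (\prod_(i < m) 'X_i ^+ e i) = \prod_(i < m) f i ^+ e i.
Proof.
rewrite /subst_vars rmorph_prod; apply: eq_bigr => i _.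
by rewrite rmorphXn /= comp_mpolyXU -tnth_nth tnth_mktuple.
Qed.

Lemma first_prod m (j : 'I_m) (e : 'I_m -> nat) : val j = 0%N ->
  \prod_(i < m) sub_first i ^+ e i = \prod_(i < m | i != j) 'X_i ^+ e i.
Proof.
move=> j0; rewrite (bigD1 j) //= /sub_first j0 eqxx expr1n mul1r.
apply: eq_bigr => i ij; rewrite ifF //; apply/negbTE; apply: contra ij => /eqP i0.
by apply/eqP/val_inj; rewrite /= i0 j0.
Qed.

Lemma merge_prod m (j : 'I_m) (e : 'I_m -> nat) (jp : 'I_m) : val j != 0%N -> val jp = (val j).-1 ->
  \prod_(i < m) sub_merge j i ^+ e i = \prod_(i < m | i != j) 'X_i ^+ e i * 'X_j ^+ e jp.
Proof.
move=> j0 ejp.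
have vjp : (val j == (val j).-1) = false.
  by case: (val j) j0 => [//|k _] /=; rewrite eq_sym (ltn_eqF (ltnSn k)).
have jpj : jp != j by apply/negP => /eqP E; move: vjp; rewrite -{1}E ejp eqxx.
rewrite (bigD1 j) //= /sub_merge vjp.
rewrite eqxx expr1n mul1r.
rewrite (eq_bigr (fun i => 'X_i ^+ e i * (if val i == (val j).-1 then 'X_j ^+ e i else 1))); last first.
  by move=> i ij; rewrite (negbTE ij); case: ifP => _; rewrite ?exprMn ?mulr1.
rewrite big_split /=; congr (_ * _).
rewrite (bigD1 jp) //= -ejp eqxx big1 ?mulr1 //.
move=> i /andP[_ ijp]; rewrite ifF //; apply/negbTE; apply: contra ijp => /eqP E.
by apply/eqP/val_inj => /=; rewrite E ejp.
Qed.

Lemma bmax_inj n (P : {set {set 'I_n}}) : partition P [set: 'I_n] -> {in P &, injective (@bmax n)}.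
Proof.
case/and3P => _ /trivIsetP triv P0 B1 B2 B1P B2P e.
have n1 : B1 != set0 by apply: contraNneq P0 => <-.
have n2 : B2 != set0 by apply: contraNneq P0 => <-.
have [x1 x1B e1] := bmax_mem n1; have [x2 x2B e2] := bmax_mem n2.
have x12 : x1 = x2 by apply/val_inj; rewrite e1 e2 e.
subst x2; apply/eqP; apply: contraTT isT => ne.
by move/disjointFr: (triv _ _ B1P B2P ne) => /(_ _ x1B); rewrite x2B.
Qed.

Lemma labelE n (P : {set {set 'I_n}}) k : label k.+1 P = (#|[set B in P | ab P k (bmax B)]|).+1.
Proof. exact: label_above. Qed.

Lemma part1_P m n (P : {set {set 'I_n}}) (j : 'I_m) : partition P [set: 'I_n] ->
  ('X_j - 1) * \sum_(B in P | cls P j B) rest P j * 'X_j ^+ (rk P B).+1 =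
  wP m P - (if val j == 0%N then 'X_j * subst_vars (@sub_first m) (wP m P)
            else subst_vars (sub_merge j) (wP m P)).
Proof.
move=> pP.
have E1 : \sum_(B in P | cls P j B) rest P j * 'X_j ^+ (rk P B).+1 =
          rest P j * 'X_j * \sum_(B in P | cls P j B) 'X_j ^+ (rk P B).
  by rewrite mulr_sumr; apply: eq_bigr => B _; rewrite exprS mulrA.
pose A1 := fun z => (val j != 0%N) && ab P (val j).-1 z.
pose A2 := fun z => ab P (val j) z.
have R := @rank_set _ ('X_j : {mpoly int[m]}) _ P (@bmax n) A1 A2 (bmax_inj pP).
have u2 : upc A2 by move=> x y xy; apply: above_mono_z.
have u1 : upc A1 by move=> x y xy /andP[j0 H]; rewrite /A1 j0 /=; apply: above_mono_z xy H.
have u12 : forall x, A1 x -> A2 x.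
  move=> x /andP[j0 H]; apply: (above_mono_k' _ H); exact: leq_pred.
have {R} R := R u1 u2 u12.
have E2 : \sum_(B in P | cls P j B) ('X_j : {mpoly int[m]}) ^+ (rk P B) =
          \sum_(B in P | A2 (bmax B) && ~~ A1 (bmax B)) 'X_j ^+ #|[set C in P | (bmax B < bmax C)%N]|.
  by apply: eq_bigl => B; rewrite /cls /A1 /A2 negb_and negbK.
rewrite E1 mulrCA E2 R.
have wE : wP m P = rest P j * 'X_j ^+ label j.+1 P.
  by rewrite /wP (bigD1 j) //= mulrC.
case: eqP => [j0|/eqP j0].
  have N : 'X_j * subst_vars (@sub_first m) (wP m P) = rest P j * 'X_j ^+ 1.
    by rewrite /wP subst_prod (first_prod _ j0) -/(rest P j) expr1 mulrC.
  have jf : (val j != 0%N) = false by rewrite j0.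
  rewrite N {1}wE labelE /A1 /A2 jf /=.
  rewrite (_ : [set B in P | false] = set0); last by apply/setP => B; rewrite !inE andbF.
  by rewrite cards0 !mulrBr exprS mulrA expr0 mulr1 expr1.
have jpm : ((val j).-1 < m)%N by apply: leq_ltn_trans (leq_pred _) (ltn_ord j).
have N : subst_vars (sub_merge j) (wP m P) = rest P j * 'X_j ^+ label (val j) P.
  rewrite /wP subst_prod (merge_prod _ j0 (erefl : val (Ordinal jpm) = (val j).-1)) -/(rest P j).
  by rewrite /= prednK // lt0n.
have jpos : (0 < val j)%N by rewrite lt0n.
have L : label (val j) P = (#|[set B in P | ab P (val j).-1 (bmax B)]|).+1.
  by rewrite -{1}(prednK jpos) labelE.
rewrite N {1}wE L labelE /A1 /A2 j0 /=.
by rewrite !mulrBr !exprS !mulrA.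
Qed.

Lemma subst_sum m (f : 'I_m -> {mpoly int[m]}) (I : finType) (p : pred I) (g : I -> {mpoly int[m]}) :
  subst_vars f (\sum_(i | p i) g i) = \sum_(i | p i) subst_vars f (g i).
Proof. by rewrite /subst_vars raddf_sum. Qed.

Lemma part1 m (j : 'I_m) n : ('X_j - 1) * Qd j n = Fcoef m n - numer_sub j (Fcoef m) n.
Proof.
rewrite /Qd /numer_sub /Fcoef mulr_sumr.
case: eqP => j0 /=.
  rewrite subst_sum mulr_sumr -sumrB; apply: eq_bigr => P /andP[pP _].
  by rewrite (part1_P _ pP) j0 eqxx.
rewrite subst_sum -sumrB; apply: eq_bigr => P /andP[pP _].
by rewrite (part1_P _ pP) (introF eqP j0).
Qed.

Lemma cls_unique n (P : {set {set 'I_n}}) B j1 j2 : cls P j1 B -> cls P j2 B -> j1 = j2.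
Proof.
wlog le : j1 j2 / (j1 <= j2)%N.
  by move=> H c1 c2; case: (leqP j1 j2) => [l|l]; [apply: H|symmetry; apply: H => //; apply: ltnW].
move=> /andP[a1 _] /andP[_ c2]; apply/eqP; rewrite eqn_leq le /=; apply: contraTT c2.
rewrite -ltnNge => lt; rewrite negb_or negbK (gtn_eqF (leq_ltn_trans (leq0n _) lt)) /=.
by apply: above_mono_k' a1; rewrite -ltnS prednK // (leq_ltn_trans (leq0n _) lt).
Qed.

Lemma cls_exists n (P : {set {set 'I_n}}) B k : ab P k (bmax B) ->
  exists2 j, (j <= k)%N & cls P j B.
Proof.
move=> H; have ex : exists j, ab P j (bmax B) by exists k.
case: (ex_minnP ex) => j0 a0 mn; exists j0; first exact: mn.
rewrite /cls a0 /=; case: j0 a0 mn => [//|j] a0 mn /=.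
by apply/negP => /mn; rewrite ltnn.
Qed.

Lemma cls_ab n (P : {set {set 'I_n}}) B j k : (j <= k)%N -> cls P j B -> ab P k (bmax B).
Proof. by move=> jk /andP[a _]; apply: above_mono_k' a. Qed.

Lemma big_opt (R : nmodType) (T : finType) (p : pred (option T)) (G : option T -> R) :
  \sum_(o | p o) G o = (if p None then G None else 0) + \sum_(x | p (Some x)) G (Some x).
Proof.
rewrite big_mkcond [X in _ + X]big_mkcond.
have pe : perm_eq (index_enum (option T)) (None :: map Some (index_enum T)).
  apply: uniq_perm; first exact: index_enum_uniq.
    rewrite /= map_inj_uniq ?index_enum_uniq //; last by apply: Some_inj.
    by rewrite andbT; apply/mapP => -[x _ //].
  by case => [x|]; rewrite !mem_index_enum /= ?in_cons //= mem_map ?mem_index_enum //; apply: Some_inj.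
by rewrite [LHS](perm_big _ pe) big_cons big_map.
Qed.

Lemma w_single m n (P : {set {set 'I_n}}) : partition P [set: 'I_n] ->
  wP m (ext P None) = (\prod_(i < m) 'X_i) * wP m P.
Proof.
move=> pP; rewrite /wP -big_split /=; apply: eq_bigr => i _.
by rewrite label_single // exprS.
Qed.

Lemma w_attach m n (P : {set {set 'I_n}}) B (j0 : 'I_m) :
  partition P [set: 'I_n] -> B \in P -> cls P j0 B ->
  wP m (ext P (Some B)) = (\prod_(i < m | (i <= j0)%N) 'X_i) * (rest P j0 * 'X_j0 ^+ (rk P B).+1).
Proof.
move=> pP BP /andP[h1 h2].
rewrite /wP (eq_bigr (fun k : 'I_m => 'X_k ^+ (k <= j0)%N * 'X_k ^+ (if k == j0 then (rk P B).+1 else label k.+1 P))); last first.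
  move=> k _; rewrite -exprD (label_attach k pP BP h1 h2).
  case: ltngtP => [kj|jk|kj].
  - have -> : (k == j0) = false by apply/negbTE/eqP => E; rewrite E ltnn in kj.
    by rewrite add1n.
  - have -> : (k == j0) = false by apply/negbTE/eqP => E; rewrite E ltnn in jk.
    by rewrite add0n.
  - have -> : k = j0 by apply/val_inj.
    by rewrite eqxx add1n.
rewrite big_split /=; congr (_ * _).
  rewrite [RHS]big_mkcond; apply: eq_bigr => k _; by case: (k <= j0)%N; rewrite ?expr1 ?expr0.
rewrite (bigD1 j0) //= eqxx mulrC /rest; congr (_ * _).
by apply: eq_bigr => k kj; rewrite (negbTE kj).
Qed.

Definition okP m n (P : {set {set 'I_n}}) (o : option {set 'I_n}) : bool :=
  valid P o && ~~ (isS o && ~~ ab P m.-1 (bo o)).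

Lemma F_reindex m n : (0 < m)%N ->
  Fcoef m n.+1 = \sum_(P : {set {set 'I_n}} | Pim m P) \sum_(o | okP m P o) wP m (ext P o).
Proof.
move=> hm.
rewrite /Fcoef (reindex_onto (fun p : {set {set 'I_n}} * option {set 'I_n} => ext p.1 p.2)
                             (fun P' => (res P', cho P'))); last first.
  by move=> P' /andP[pP' _]; have [_ _ ->] := ext_res pP'.
rewrite pair_big_dep; apply: eq_bigl => -[P o] /=.
apply/andP/andP => [[HP /eqP E]|[HP okp]].
  have pP' : partition (ext P o) [set: 'I_n.+1] by case/andP: HP.
  have [pr vr _] := ext_res pP'.
  case: E => E1 E2; rewrite E1 E2 in pr vr.
  by move: HP; rewrite (Pim_ext hm pr vr) => /andP[H1 H2]; rewrite H1 /okP vr H2.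
have pP : partition P [set: 'I_n] by case/andP: HP.
case/andP: okp => vo nb.
split; first by rewrite (Pim_ext hm pP vo) HP nb.
have P0 : set0 \notin P by case/and3P: pP.
by rewrite res_ext // cho_ext.
Qed.

Lemma F_succ m n : (0 < m)%N ->
  Fcoef m n.+1 = (\prod_(i < m) 'X_i) * Fcoef m n +
                 \sum_(j < m) (\prod_(i < m | (i <= j)%N) 'X_i) * Qd j n.
Proof.
move=> hm; rewrite F_reindex // /Qd /Fcoef mulr_sumr.
rewrite [X in _ = _ + X](eq_bigr (fun j : 'I_m => \sum_(P : {set {set 'I_n}} | Pim m P)
   (\prod_(i < m | (i <= j)%N) 'X_i) * \sum_(B in P | cls P j B) rest P j * 'X_j ^+ (rk P B).+1));
  last by move=> j _; rewrite mulr_sumr.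
rewrite exchange_big /= -big_split; apply: eq_bigr => P /andP[pP _].
rewrite big_opt /okP /= (w_single _ pP); congr (_ + _).
rewrite (eq_bigl (fun B => (B \in P) && ab P m.-1 (bmax B))); last by move=> B; rewrite /= negbK.
rewrite [RHS](eq_bigr (fun j : 'I_m => \sum_(B in P | cls P j B)
   (\prod_(i < m | (i <= j)%N) 'X_i) * (rest P j * 'X_j ^+ (rk P B).+1)));
  last by move=> j _; rewrite mulr_sumr.
rewrite (exchange_big_dep (fun B => B \in P)) /=; last by move=> j B _ /andP[].
rewrite big_mkcondr; apply: eq_bigr => B BP.
case: ifP => abB.
  have [j0 j0le c0] := cls_exists abB.
  have j0m : (j0 < m)%N by apply: leq_ltn_trans j0le _; rewrite prednK.
  rewrite (big_pred1 (Ordinal j0m)); last first.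
    move=> j; rewrite /= BP /=; apply/idP/eqP => [cj|->//].
    by apply/val_inj; rewrite /= (cls_unique cj c0).
  exact: (@w_attach m n P B (Ordinal j0m) pP BP c0).
rewrite big1 // => j /andP[_ cj].
have : ab P m.-1 (bmax B) by apply: cls_ab cj; rewrite -ltnS prednK.
by rewrite abB.
Qed.

Lemma Pim0 m (P : {set {set 'I_0}}) : Pim m P = (P == set0).
Proof.
have T0 : forall A : {set 'I_0}, A = set0 by move=> A; apply/setP => -[].
apply/idP/eqP => [/andP[/and3P[_ _ P0] _]|->].
  apply/setP => B; rewrite inE; apply/negbTE; by rewrite (T0 B).
rewrite /Pim /set_partition has_nestingE; apply/andP; split.
  apply/and3P; split.
  - by rewrite /cover big_set0 (T0 setT).
  - by apply/trivIsetP => A B; rewrite inE.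
  - by rewrite inE.
by apply/existsP => -[[]].
Qed.

Lemma F_zero m : Fcoef m 0 = \prod_(i < m) 'X_i.
Proof.
rewrite /Fcoef (big_pred1 set0); last by move=> P; rewrite Pim0.
by apply: eq_bigr => i _; rewrite labelE (_ : [set B in set0 | _] = set0) ?cards0 ?expr1 //;
  apply/setP => B; rewrite !inE.
Qed.

Unset Implicit Arguments.

Theorem proposition2 (m : nat) (hm : (0 < m)%N) :
  let F := Fcoef m in
  let U := \prod_(i < m) ('X_i : {mpoly int[m]}) in
  exists Q : 'I_m -> nat -> {mpoly int[m]},
    (forall (j : 'I_m) (n : nat), ('X_j - 1) * Q j n = F n - numer_sub j F n) /\
    (forall n : nat,
       F n = fcst U n
             + tmul (fun k => U * F k) n
             + tmul (fun k => \sum_(j < m)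
                                (\prod_(i < m | (i <= j)%N) 'X_i) * Q j k) n).
Proof.
move=> F U; exists (fun j n => Qd j n); split.
  by move=> j n; apply: part1.
case => [|n].
  by rewrite /fcst /tmul !addr0 /F F_zero.
by rewrite /fcst /tmul add0r /F F_succ.
Qed.
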